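(* Let $G$ be a finite group of odd order $n$ and let $Z_2 = \{0,1\}$ be the near-ring with addition modulo $2$ and multiplication $a\cdot b = a$ for all $a,b \in Z_2$. Then the group near-ring $Z_2G$ has a subnear-ring $S \neq \{0\}$ which is a Boolean near-ring (i.e. $x\cdot x = x$ for all $x \in S$).
   Context: The group near-ring $Z_2G$ consists of all formal sums $\sum_{g \in G} \alpha(g) g$ with $\alpha(g) \in Z_2$; addition is coefficientwise, and the product of $\alpha = \sum_{g \in \operatorname{supp}\alpha} \alpha(g) g$ and $\beta = \sum_{h \in \operatorname{supp}\beta} \beta(h) h$ (where $\operatorname{supp}$ denotes the set of group elements with nonzero coefficient) is $\sum_{g \in \operatorname{supp}\alpha,\, h\in\operatorname{supp}\beta} (\alpha(g)\cdot\beta(h))\, gh$, like terms being collected by addition in $Z_2$. A subnear-ring is a subset that is a subgroup under addition and closed under multiplication. *)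

(* Defs.v *)
From mathcomp Require Import all_boot all_fingroup.
Set Implicit Arguments. Unset Strict Implicit. Unset Printing Implicit Defensive.

(* The near-ring Z_2 = {0,1}: carrier bool (false = 0, true = 1),
   addition modulo 2 (xor), multiplication a . b = a. *)
Definition z2add (a b : bool) : bool := addb a b.
Definition z2mul (a b : bool) : bool := a.
Definition z2opp (a : bool) : bool := a.

Section GroupNearRing.
Variable gT : finGroupType.

(* Elements of Z_2 G: formal sums, i.e. coefficient functions G -> Z_2. *)
Definition Z2G := {ffun gT -> bool}.

Definition gnr0 : Z2G := [ffun _ => false].
Definition gnr_add (a b : Z2G) : Z2G := [ffun g => z2add (a g) (b g)].
Definition gnr_opp (a : Z2G) : Z2G := [ffun g => z2opp (a g)].

Definition supp (a : Z2G) : {set gT} := [set g | a g != false].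

Definition gnr_mul (a b : Z2G) : Z2G :=
  [ffun k => \big[z2add/false]_(g in supp a) \big[z2add/false]_(h in supp b)
               (if (g * h)%g == k then z2mul (a g) (b h) else false)].

Definition subnear_ring (S : {set Z2G}) : Prop :=
  [/\ gnr0 \in S,
      forall x y, x \in S -> y \in S -> gnr_add x y \in S,
      forall x, x \in S -> gnr_opp x \in S &
      forall x y, x \in S -> y \in S -> gnr_mul x y \in S].

Definition boolean_near_ring (S : {set Z2G}) : Prop :=
  forall x, x \in S -> gnr_mul x x = x.

End GroupNearRing.

(* Main.v *)
Require Import Defs.
From mathcomp Require Import all_boot all_fingroup.

Section H.
Variable gT : finGroupType.

Definition xall : Z2G gT := [ffun _ => true].

Lemma supp0 : supp (gnr0 gT) =i pred0.
Proof. by move=> g; rewrite inE ffunE. Qed.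

Lemma mul0l a : gnr_mul (gnr0 gT) a = gnr0 gT.
Proof.
apply/ffunP=> k; rewrite !ffunE; exact: big_pred0 supp0.
Qed.

Lemma mul0r a : gnr_mul a (gnr0 gT) = gnr0 gT.
Proof.
apply/ffunP=> k; rewrite !ffunE /z2add; apply: big1 => g _; exact: big_pred0 supp0.
Qed.

Lemma itodd n : iter n (addb true) false = odd n.
Proof. by elim: n => //= n ->. Qed.

Lemma mulxx (hodd : odd #|[set: gT]|) : gnr_mul xall xall = xall.
Proof.
apply/ffunP=> k; rewrite !ffunE.
have sx : supp xall = [set: gT] by apply/setP=> g; rewrite !inE ffunE.
rewrite sx /z2add.
rewrite (eq_bigr (fun _ => true)).
  by rewrite big_const itodd.
move=> g _.
rewrite (bigD1 (g^-1 * k)%g) ?inE //= mulKVg eqxx /z2mul ffunE /=.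
rewrite big1 // => h /andP [_ hne]; case: eqP => // E.
by move: hne; rewrite -E mulKg eqxx.
Qed.

End H.

Theorem theorem3p5p6 (gT : finGroupType) (hodd : odd #|[set: gT]|) :
  exists S : {set Z2G gT},
    [/\ subnear_ring S, S != [set gnr0 gT] & boolean_near_ring S].
Proof.
have x0 : xall gT != gnr0 gT.
  by apply/eqP=> /ffunP /(_ 1%g); rewrite !ffunE.
exists [set gnr0 gT; xall gT]; split.
- split.
  + by rewrite !inE eqxx.
  + move=> x y; rewrite !inE => /orP [] /eqP -> /orP [] /eqP ->;
      apply/orP; [left|right|right|left]; apply/eqP/ffunP=> g; rewrite !ffunE //.
  + move=> x; rewrite !inE => /orP [] /eqP ->; apply/orP; [left|right];
      apply/eqP/ffunP=> g; rewrite !ffunE //.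
  + move=> x y; rewrite !inE => /orP [] /eqP -> /orP [] /eqP ->;
      rewrite ?mul0l ?mul0r ?mulxx ?eqxx ?orbT //.
- apply/eqP=> /setP /(_ (xall gT)); rewrite !inE eqxx orbT (negbTE x0).
  done.
- move=> x; rewrite !inE => /orP [] /eqP ->; by rewrite ?mul0l ?mulxx.
Qed.
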